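(* For every $(2,2)$-form $\alpha$ in $\mathbb C^4$ there exists a basis $\omega_1,\dots,\omega_4$ of $(\mathbb C^4)^\ast$ such that $$\alpha\wedge\omega_1\wedge\omega_2\wedge\bar\omega_1\wedge\bar\omega_j=\alpha\wedge\omega_1\wedge\omega_2\wedge\bar\omega_2\wedge\bar\omega_j=0\quad\text{for } j=3,4.$$
   Context: Forms are constant-coefficient forms on $\mathbb C^4$, i.e. elements of the exterior algebra generated by $(\mathbb C^4)^\ast$ and its complex conjugate; a $(2,2)$-form is a linear combination of wedge products of two $(1,0)$-forms and two $(0,1)$-forms. *)

(* Defs.v *)
From HB Require Import structures.
From mathcomp Require Import all_boot all_order all_algebra.
From mathcomp Require Import complex.
From mathcomp Require Import reals.
Set Implicit Arguments. Unset Strict Implicit. Unset Printing Implicit Defensive.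
Import Order.TTheory GRing.Theory Num.Theory.
Local Open Scope ring_scope.

(* Constant-coefficient forms on C^4: the exterior algebra on the 8 generators
   dz_1..dz_4 (indices lshift 4 i) and dzbar_1..dzbar_4 (indices rshift 4 i).
   A cform is given by its coefficients on the basis e_S = e_{s1}/\.../\e_{sk},
   S = {s1 < ... < sk} a subset of 'I_8. *)
Definition cform (C : Type) := {ffun {set 'I_(4 + 4)} -> C}.

(* sign of e_A /\ e_B = (-1)^(inversions) e_(A u B) for disjoint A, B *)
Definition wsign (A B : {set 'I_(4 + 4)}) : bool :=
  odd #|[set p : 'I_(4 + 4) * 'I_(4 + 4) | [&& p.1 \in A, p.2 \in B & (p.2 < p.1)%N]]|.

Definition wedge (C : comNzRingType) (f g : cform C) : cform C :=
  [ffun S => \sum_(A : {set 'I_(4 + 4)})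
               \sum_(B : {set 'I_(4 + 4)} | [disjoint A & B] && (A :|: B == S))
                 (-1) ^+ wsign A B * f A * g B].

Definition holo1 (C : comNzRingType) (c : 'rV[C]_4) : cform C :=
  [ffun S => \sum_(i < 4) (if S == [set lshift 4 i] then c 0 i else 0)].

Definition antiholo1 (C : comNzRingType) (d : 'rV[C]_4) : cform C :=
  [ffun S => \sum_(i < 4) (if S == [set rshift 4 i] then d 0 i else 0)].

Definition conjform1 (R : rcfType) (c : 'rV[(complex R)]_4) : cform (complex R) :=
  antiholo1 (map_mx (@conjc R) c).

Definition is_22form (C : comNzRingType) (f : cform C) : Prop :=
  forall S, f S != 0 ->
    #|[set i : 'I_4 | lshift 4 i \in S]| = 2%N /\
    #|[set i : 'I_4 | rshift 4 i \in S]| = 2%N.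

Definition zero_form (C : comNzRingType) : cform C := [ffun => 0].

(* Main.v *)
Require Import Defs.
From HB Require Import structures.
From mathcomp Require Import all_boot all_order all_algebra.
From mathcomp Require Import complex.
From mathcomp Require Import reals.
From mathcomp Require Import ring.
From Stdlib Require Import Classical_Prop.
Import GRing.Theory Num.Theory.
Local Open Scope ring_scope.
Set Implicit Arguments. Unset Strict Implicit.

Notation FF C := {ffun {set 'I_(4 + 4)} -> C}.
Definition fsc (C : comNzRingType) (k : C) (f : FF C) : FF C := [ffun S => k * f S].
Definition ebas (C : comNzRingType) (x : 'I_(4+4)) : FF C := [ffun S => (S == [set x])%:R].

Lemma wedgeDl (C : comNzRingType) (f g h : FF C) :
  wedge (f + g) h = wedge f h + wedge g h.
Proof.
apply/ffunP => S; rewrite !ffunE -big_split; apply: eq_bigr => A _.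
rewrite -big_split; apply: eq_bigr => B _; rewrite ffunE; rewrite /=; ring.
Qed.
Lemma wedgeDr (C : comNzRingType) (f g h : FF C) :
  wedge f (g + h) = wedge f g + wedge f h.
Proof.
apply/ffunP => S; rewrite !ffunE -big_split; apply: eq_bigr => A _.
rewrite -big_split; apply: eq_bigr => B _; rewrite ffunE; rewrite /=; ring.
Qed.
Lemma wedgeZl (C : comNzRingType) (k : C) (f h : FF C) :
  wedge (fsc k f) h = fsc k (wedge f h).
Proof.
apply/ffunP => S; rewrite !ffunE mulr_sumr; apply: eq_bigr => A _.
rewrite mulr_sumr; apply: eq_bigr => B _; rewrite ffunE /=; ring.
Qed.
Lemma wedgeZr (C : comNzRingType) (k : C) (f h : FF C) :
  wedge f (fsc k h) = fsc k (wedge f h).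
Proof.
apply/ffunP => S; rewrite !ffunE mulr_sumr; apply: eq_bigr => A _.
rewrite mulr_sumr; apply: eq_bigr => B _; rewrite ffunE /=; ring.
Qed.
Lemma wedge0r (C : comNzRingType) (f : FF C) : wedge f 0 = 0.
Proof. by apply/ffunP => S; rewrite !ffunE big1 // => A _; rewrite big1 // => B _; rewrite ffunE mulr0. Qed.
Lemma wedge0l (C : comNzRingType) (f : FF C) : wedge 0 f = 0.
Proof. by apply/ffunP => S; rewrite !ffunE big1 // => A _; rewrite big1 // => B _; rewrite ffunE mulr0 mul0r. Qed.
Lemma wedgeNl (C : comNzRingType) (f h : FF C) : wedge (- f) h = - wedge f h.
Proof. by apply: (addrI (wedge f h)); rewrite -wedgeDl !subrr wedge0l. Qed.
Lemma wedge_sumr (C : comNzRingType) (f : FF C) (G : 'I_4 -> FF C) :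
  wedge f (\sum_i G i) = \sum_i wedge f (G i).
Proof.
elim/big_rec2: _ => [|i x y _ <-]; first exact: wedge0r.
by rewrite wedgeDr.
Qed.
Lemma wedge_suml (C : comNzRingType) (f : FF C) (G : 'I_4 -> FF C) :
  wedge (\sum_i G i) f = \sum_i wedge (G i) f.
Proof.
elim/big_rec2: _ => [|i x y _ <-]; first exact: wedge0l.
by rewrite wedgeDl.
Qed.

Lemma holo1E (C : comNzRingType) (u : 'rV[C]_4) :
  holo1 u = \sum_i fsc (u 0 i) (ebas C (lshift 4 i)).
Proof.
apply/ffunP => S; rewrite !ffunE sum_ffunE; apply: eq_bigr => i _.
by rewrite !ffunE; case: eqP => _; rewrite ?mulr1 ?mulr0.
Qed.
Lemma antiholo1E (C : comNzRingType) (u : 'rV[C]_4) :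
  antiholo1 u = \sum_i fsc (u 0 i) (ebas C (rshift 4 i)).
Proof.
apply/ffunP => S; rewrite !ffunE sum_ffunE; apply: eq_bigr => i _.
by rewrite !ffunE; case: eqP => _; rewrite ?mulr1 ?mulr0.
Qed.
Lemma holo1D (C : comNzRingType) (u v : 'rV[C]_4) : holo1 (u + v) = holo1 u + holo1 v.
Proof.
apply/ffunP => S; rewrite !ffunE -big_split; apply: eq_bigr => i _.
by rewrite !mxE /=; case: eqP => _; rewrite ?addr0.
Qed.
Lemma holo1Z (C : comNzRingType) (k : C) (u : 'rV[C]_4) : holo1 (k *: u) = fsc k (holo1 u).
Proof.
apply/ffunP => S; rewrite !ffunE mulr_sumr; apply: eq_bigr => i _.
by rewrite !mxE; case: eqP => _; rewrite ?mulr0.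
Qed.
Lemma conj1D (R : rcfType) (u v : 'rV[complex R]_4) :
  conjform1 (u + v) = conjform1 u + conjform1 v.
Proof.
apply/ffunP => S; rewrite !ffunE -big_split; apply: eq_bigr => i _.
by rewrite !mxE /=; case: eqP => _; rewrite ?addr0 // raddfD.
Qed.
Lemma conj1Z (R : rcfType) (k : complex R) (u : 'rV[complex R]_4) :
  conjform1 (k *: u) = fsc (conjc k) (conjform1 u).
Proof.
apply/ffunP => S; rewrite !ffunE mulr_sumr; apply: eq_bigr => i _.
by rewrite !mxE /=; case: eqP => _; rewrite ?mulr0 // rmorphM.
Qed.
Lemma wedge_e (C : comNzRingType) (f : FF C) (a : 'I_(4+4)) :
  wedge f (ebas C a) = [ffun S : {set _} => if a \in S then (-1) ^+ wsign (S :\ a) [set a] * f (S :\ a) else 0].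
Proof.
apply/ffunP => S; rewrite !ffunE.
rewrite (eq_bigr (fun A : {set _} => if [disjoint A & [set a]] && (A :|: [set a] == S)
     then (-1) ^+ wsign A [set a] * f A else 0)); last first.
  move=> A _; rewrite big_mkcond (bigD1 [set a]) //= big1 ?addr0.
    by rewrite ffunE eqxx mulr1.
  move=> B /negbTE hB; rewrite ffunE hB mulr0; by case: ifP.
rewrite (bigD1 (S :\ a)) //= big1 ?addr0.
  rewrite disjoint_sym disjoints1 !inE eqxx /=.
  case: (boolP (a \in S)) => aS.
    by rewrite setUC setD1K // eqxx.
  case: eqP => // hS; move: aS; rewrite -hS !inE eqxx; by rewrite orbT.
move=> A hA; rewrite disjoint_sym disjoints1.
case: (boolP (a \in A)) => //= aA; case: eqP => // hS.
by move: hA; rewrite -hS setUC setU1K // eqxx.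
Qed.

Lemma wsign1 (A : {set 'I_(4+4)}) b : wsign A [set b] = odd #|[set x in A | (b < x)%N]|.
Proof.
rewrite /wsign; congr odd.
have inj : injective (fun x : 'I_(4+4) => (x, b)) by move=> x y [].
rewrite -(card_imset [set x in A | (b < x)%N] inj).
apply: eq_card => -[x y]; rewrite [in LHS]inE /=.
apply/idP/imsetP.
  rewrite inE; case/and3P => xA /eqP -> bx; exists x => //; by rewrite !inE xA.
by case=> z; rewrite !inE => /andP[zA bz] [-> ->]; rewrite zA eqxx bz.
Qed.

Lemma card_sepU1 (T : {set 'I_(4+4)}) a (P : pred 'I_(4+4)) : a \notin T ->
  #|[set x in a |: T | P x]| = (P a + #|[set x in T | P x]|)%N.
Proof.
move=> aT; case: (boolP (P a)) => Pa.
  have -> : [set x in a |: T | P x] = a |: [set x in T | P x].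
    by apply/setP => x; rewrite !inE; case: eqP => [->|]; rewrite ?Pa //=.
  by rewrite cardsU1 !inE (negbTE aT).
have -> : [set x in a |: T | P x] = [set x in T | P x].
  by apply/setP => x; rewrite !inE; case: eqP => [->|]; rewrite ?(negbTE Pa) //= andbF.
by [].
Qed.

Lemma anticomm_e (C : comNzRingType) (X : FF C) a b :
  wedge (wedge X (ebas C a)) (ebas C b) = - wedge (wedge X (ebas C b)) (ebas C a).
Proof.
rewrite !wedge_e; apply/ffunP => S; rewrite !ffunE !inE.
case: (eqVneq a b) => [<-|ab]; first by rewrite /=; case: ifP; rewrite ?mulr0 ?oppr0.

case: (boolP (b \in S)) => bS; case: (boolP (a \in S)) => aS /=; rewrite ?mulr0 ?oppr0 //.
have -> : S :\ a :\ b = S :\ b :\ a by apply/setP => x; rewrite !inE; case: (x == a); case: (x == b).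
set T := S :\ b :\ a.
have hb : S :\ b = a |: T by rewrite setD1K // !inE ab.
have ha : S :\ a = b |: T.
  rewrite /T; have -> : S :\ b :\ a = S :\ a :\ b by apply/setP => x; rewrite !inE; case: (x == a); case: (x == b).
  by rewrite setD1K // !inE eq_sym ab.
have aT : a \notin T by rewrite !inE eqxx.
have bT : b \notin T by rewrite !inE eqxx andbF.
rewrite !wsign1 !signr_odd hb ha !card_sepU1 // !exprD.
case: (ltngtP a b) => [h|h|h]; last by move: ab; rewrite (val_inj h) eqxx.
  rewrite /= ?expr0 ?expr1; ring.
rewrite /= ?expr0 ?expr1; ring.
Qed.

Lemma fscE (C : comNzRingType) k (f : FF C) S : fsc k f S = k * f S.
Proof. by rewrite ffunE. Qed.
Lemma oppfE (C : comNzRingType) (f : FF C) S : (- f) S = - f S.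
Proof. by rewrite ffunE. Qed.
Lemma sumfE (C : comNzRingType) (F : 'I_4 -> FF C) S : (\sum_i F i) S = \sum_i F i S.
Proof. by rewrite sum_ffunE. Qed.
Lemma addfE (C : comNzRingType) (f g : FF C) S : (f + g) S = f S + g S.
Proof. by rewrite ffunE. Qed.

Lemma anticomm_sum (C : comNzRingType) (X : FF C) (c d : 'I_4 -> C) (p q : 'I_4 -> 'I_(4+4)) :
  wedge (wedge X (\sum_i fsc (c i) (ebas C (p i)))) (\sum_j fsc (d j) (ebas C (q j))) =
  - wedge (wedge X (\sum_j fsc (d j) (ebas C (q j)))) (\sum_i fsc (c i) (ebas C (p i))).
Proof.
rewrite !wedge_sumr.
under eq_bigr do rewrite wedgeZr wedge_suml.
under [in RHS]eq_bigr do rewrite wedgeZr wedge_suml.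
under eq_bigr do under eq_bigr do rewrite wedgeZr wedgeZl anticomm_e.
under [in RHS]eq_bigr do under eq_bigr do rewrite wedgeZr wedgeZl.
apply/ffunP => S; rewrite oppfE !sumfE.
under eq_bigr do rewrite fscE sumfE.
under [in RHS]eq_bigr do rewrite fscE sumfE.
under eq_bigr do under eq_bigr do rewrite !fscE oppfE.
under [in RHS]eq_bigr do under eq_bigr do rewrite !fscE.
under eq_bigr do rewrite mulr_sumr.
under [in RHS]eq_bigr do rewrite mulr_sumr.
rewrite exchange_big -sumrN; apply: eq_bigr => i _.
rewrite -sumrN; apply: eq_bigr => j _; rewrite /=; ring.
Qed.

Definition Hf (R : rcfType) (alpha : FF (complex R)) (u v w z : 'rV[complex R]_4) : FF (complex R) :=
  wedge (wedge (wedge (wedge alpha (holo1 u)) (holo1 v)) (conjform1 w)) (conjform1 z).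

Lemma Hf_anti (R : rcfType) (alpha : FF (complex R)) u v w z :
  Hf alpha u v w z = - Hf alpha u v z w.
Proof. by rewrite /Hf /conjform1 !antiholo1E; apply: anticomm_sum. Qed.

Lemma Hf_diag (R : rcfType) (alpha : FF (complex R)) u v w :
  Hf alpha u v w w = 0.
Proof.
apply/ffunP => S; rewrite [X in _ = X]ffunE.
have := congr1 (fun f : FF _ => f S) (Hf_anti alpha u v w w).
rewrite /= oppfE => /eqP; rewrite -addr_eq0 -mulr2n mulrn_eq0 /= => /eqP //.
Qed.

Lemma HfD1 (R : rcfType) (alpha : FF (complex R)) u1 u2 v w z :
  Hf alpha (u1 + u2) v w z = Hf alpha u1 v w z + Hf alpha u2 v w z.
Proof. by rewrite /Hf holo1D wedgeDr !wedgeDl. Qed.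
Lemma HfZ1 (R : rcfType) (alpha : FF (complex R)) k u v w z :
  Hf alpha (k *: u) v w z = fsc k (Hf alpha u v w z).
Proof. by rewrite /Hf holo1Z wedgeZr !wedgeZl. Qed.
Lemma HfD2 (R : rcfType) (alpha : FF (complex R)) u v1 v2 w z :
  Hf alpha u (v1 + v2) w z = Hf alpha u v1 w z + Hf alpha u v2 w z.
Proof. by rewrite /Hf holo1D wedgeDr !wedgeDl. Qed.
Lemma HfZ2 (R : rcfType) (alpha : FF (complex R)) k u v w z :
  Hf alpha u (k *: v) w z = fsc k (Hf alpha u v w z).
Proof. by rewrite /Hf holo1Z wedgeZr !wedgeZl. Qed.
Lemma HfD3 (R : rcfType) (alpha : FF (complex R)) u v w1 w2 z :
  Hf alpha u v (w1 + w2) z = Hf alpha u v w1 z + Hf alpha u v w2 z.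
Proof. by rewrite /Hf conj1D wedgeDr !wedgeDl. Qed.
Lemma HfZ3 (R : rcfType) (alpha : FF (complex R)) k u v w z :
  Hf alpha u v (k *: w) z = fsc (conjc k) (Hf alpha u v w z).
Proof. by rewrite /Hf conj1Z wedgeZr !wedgeZl. Qed.
Lemma HfD4 (R : rcfType) (alpha : FF (complex R)) u v w z1 z2 :
  Hf alpha u v w (z1 + z2) = Hf alpha u v w z1 + Hf alpha u v w z2.
Proof. by rewrite /Hf conj1D wedgeDr. Qed.
Lemma HfZ4 (R : rcfType) (alpha : FF (complex R)) k u v w z :
  Hf alpha u v w (k *: z) = fsc (conjc k) (Hf alpha u v w z).
Proof. by rewrite /Hf conj1Z wedgeZr. Qed.

Definition degf (C : comNzRingType) (k : nat) (f : FF C) := forall S, f S != 0 -> #|S| = k.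

Lemma deg_wedge (C : comNzRingType) k l (f g : FF C) :
  degf k f -> degf l g -> degf (k + l) (wedge f g).
Proof.
move=> hf hg S H; apply/eqP; apply: contraR H => hS; rewrite ffunE; apply/eqP.
rewrite big1 // => A _; rewrite big1 // => B /andP[dAB /eqP hU].
case: (eqVneq (f A) 0) => [->|fA]; first by rewrite mulr0 mul0r.
case: (eqVneq (g B) 0) => [->|gB]; first by rewrite mulr0.
move: hS; rewrite -hU cardsU (disjoint_setI0 dAB) cards0 subn0 (hf _ fA) (hg _ gB) eqxx //.
Qed.

Lemma deg_holo1 (C : comNzRingType) (u : 'rV[C]_4) : degf 1 (holo1 u).
Proof.
move=> S; rewrite ffunE => H; apply/eqP; apply: contraR H => hS; apply/eqP.
rewrite big1 // => i _; case: eqP => // hS1; by move: hS; rewrite hS1 cards1.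
Qed.

Lemma deg_antiholo1 (C : comNzRingType) (u : 'rV[C]_4) : degf 1 (antiholo1 u).
Proof.
move=> S; rewrite ffunE => H; apply/eqP; apply: contraR H => hS; apply/eqP.
rewrite big1 // => i _; case: eqP => // hS1; by move: hS; rewrite hS1 cards1.
Qed.

Lemma card_split (S : {set 'I_(4+4)}) :
  #|S| = (#|[set i : 'I_4 | lshift 4 i \in S]| + #|[set i : 'I_4 | rshift 4 i \in S]|)%N.
Proof.
rewrite -!sum1_card big_split_ord; congr (_ + _)%N; apply: eq_bigl => i; by rewrite inE.
Qed.

Lemma deg_22 (R : rcfType) (alpha : FF (complex R)) : is_22form alpha -> degf 4 alpha.
Proof. by move=> h S /h [h1 h2]; rewrite card_split h1 h2. Qed.

Lemma Hf_supp (R : rcfType) (alpha : FF (complex R)) u v w z S :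
  is_22form alpha -> S != setT -> Hf alpha u v w z S = 0.
Proof.
move=> ha hS; apply/eqP; apply: contraR hS => H.
have := deg_wedge (deg_wedge (deg_wedge (deg_wedge (deg_22 ha) (@deg_holo1 _ u)) (@deg_holo1 _ v))
          (@deg_antiholo1 _ (map_mx conjc w))) (@deg_antiholo1 _ (map_mx conjc z)) H.
move=> hc; rewrite eqEcard subsetT cardsT card_ord hc //.
Qed.

Definition vec4 (C : comNzRingType) (p0 p1 p2 p3 : C) : 'rV[C]_4 :=
  \row_(k < 4) (if val k == 0%N then p0 else if val k == 1%N then p1
                else if val k == 2%N then p2 else p3).
Definition mat4 (C : comNzRingType) (r0 r1 r2 r3 : 'rV[C]_4) : 'M[C]_4 :=
  \matrix_(i < 4, k < 4) (if val i == 0%N then r0 0 k else if val i == 1%N then r1 0 k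
                else if val i == 2%N then r2 0 k else r3 0 k).

Lemma row_mat4 (C : comNzRingType) (r0 r1 r2 r3 : 'rV[C]_4) i :
  row i (mat4 r0 r1 r2 r3) = if val i == 0%N then r0 else if val i == 1%N then r1
                else if val i == 2%N then r2 else r3.
Proof.
apply/rowP => k; rewrite !mxE.
by case: (val i == 0%N); case: (val i == 1%N); case: (val i == 2%N).
Qed.

Ltac ord4 i := let h := fresh "h" in case: i => [[|[|[|[|i]]]] h] //.

Lemma test_ord (C : comNzRingType) :
  mat4 (vec4 1 0 0 0) (vec4 0 1 0 0) (vec4 0 0 1 0) (vec4 (0:C) 0 0 1) = 1%:M.
Proof.
apply/matrixP => i k; rewrite !mxE; ord4 i; ord4 k.
Qed.

Definition e0 (R : rcfType) : 'rV[complex R]_4 := vec4 1 0 0 0.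
Definition e1 (R : rcfType) : 'rV[complex R]_4 := vec4 0 1 0 0.
Definition e2 (R : rcfType) : 'rV[complex R]_4 := vec4 0 0 1 0.
Definition e3 (R : rcfType) : 'rV[complex R]_4 := vec4 0 0 0 1.
Definition uu (R : rcfType) (a b : complex R) : 'rV[complex R]_4 := vec4 1 0 a b.
Definition vv (R : rcfType) (c d : complex R) : 'rV[complex R]_4 := vec4 0 1 c d.

Lemma uuE (R : rcfType) (a b : complex R) : uu a b = e0 R + a *: e2 R + b *: e3 R.
Proof. apply/rowP => k; rewrite !mxE; ord4 k; rewrite /=; ring. Qed.
Lemma vvE (R : rcfType) (c d : complex R) : vv c d = e1 R + c *: e2 R + d *: e3 R.
Proof. apply/rowP => k; rewrite !mxE; ord4 k; rewrite /=; ring. Qed.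

Lemma det1_trig (C : comUnitRingType) (A : 'M[C]_4) :
  is_trig_mx A -> (forall i, A i i = 1) -> A \in unitmx.
Proof.
move=> hA h1; rewrite unitmxE det_trig // big1 ?unitr1 // => i _; exact: h1.
Qed.

Lemma unit_M (R : rcfType) (x2 y2 x3 y3 a b c d : complex R) :
  mat4 (uu a b) (vv c d) (e2 R + x2 *: uu a b + y2 *: vv c d)
       (e3 R + x3 *: uu a b + y3 *: vv c d) \in unitmx.
Proof.
have -> : mat4 (uu a b) (vv c d) (e2 R + x2 *: uu a b + y2 *: vv c d)
       (e3 R + x3 *: uu a b + y3 *: vv c d) =
  mat4 (e0 R) (e1 R) (vec4 x2 y2 1 0) (vec4 x3 y3 0 1) *m mat4 (uu a b) (vv c d) (e2 R) (e3 R).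
  apply/matrixP => i k; rewrite !mxE !big_ord_recr big_ord0 /= !mxE; ord4 i; ord4 k; rewrite /=; ring.
rewrite unitmx_mul; apply/andP; split.
  apply: det1_trig => [|i]; last by rewrite !mxE; ord4 i.
  apply/is_trig_mxP => i j; rewrite !mxE; ord4 i; ord4 j.
rewrite unitmxE -det_tr -unitmxE; apply: det1_trig => [|i]; last by rewrite !mxE; ord4 i.
apply/is_trig_mxP => i j; rewrite !mxE; ord4 i; ord4 j.
Qed.

Lemma fscDr (C : comNzRingType) (k : C) (f g : FF C) : fsc k (f + g) = fsc k f + fsc k g.
Proof. by apply/ffunP => S; rewrite !(addfE, fscE) mulrDr. Qed.

Lemma exp13 (R : rcfType) (alpha : FF (complex R)) (p q r : 'rV[complex R]_4) t :
  Hf alpha (p + t *: r) q (p + t *: r) q = Hf alpha p q p q + fsc (conjc t) (Hf alpha p q r q)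
    + fsc t (Hf alpha r q p q) + fsc t (fsc (conjc t) (Hf alpha r q r q)).
Proof.
by rewrite !(HfD1, HfZ1, HfD3, HfZ3) fscDr !addrA.
Qed.
Lemma exp24 (R : rcfType) (alpha : FF (complex R)) (p q r : 'rV[complex R]_4) t :
  Hf alpha p (q + t *: r) p (q + t *: r) = Hf alpha p q p q + fsc (conjc t) (Hf alpha p q p r)
    + fsc t (Hf alpha p r p q) + fsc t (fsc (conjc t) (Hf alpha p r p r)).
Proof.
by rewrite !(HfD2, HfZ2, HfD4, HfZ4) fscDr !addrA.
Qed.

Lemma conjci (R : rcfType) : conjc ('i%C : complex R) = - 'i%C.
Proof. by apply/eqP; rewrite eq_complex /= oppr0 !eqxx. Qed.

Lemma conjcN (R : rcfType) (x : complex R) : conjc (- x) = - conjc x.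
Proof. by case: x. Qed.

Lemma extract (R : rcfType) (P A B Q : complex R) :
  (forall t : complex R, t \in [:: 1; -1; 'i%C; -'i%C] ->
     P + conjc t * A + t * B + t * (conjc t * Q) = 0) -> A = 0.
Proof.
move=> H.
have h1 := H 1 ltac:(by rewrite inE eqxx).
have h2 := H (-1) ltac:(by rewrite !inE eqxx orbT).
have h3 := H 'i%C ltac:(by rewrite !inE eqxx !orbT).
have h4 := H (-'i%C) ltac:(by rewrite !inE eqxx !orbT).
move: h1 h2 h3 h4; rewrite !conjcN conjci conjc1 opprK.
set i := 'i%C => h1 h2 h3 h4.
have hi : i * i = -1 by rewrite -expr2 sqr_i.
have e : 4%:R * A = (P + 1 * A + 1 * B + 1 * (1 * Q)) - (P + - 1 * A + - 1 * B + - 1 * (- 1 * Q))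
   + i * ((P + - i * A + i * B + i * (- i * Q)) - (P + i * A + - i * B + - i * (i * Q)))
   - (i * i + 1) * (2%:R * B - 2%:R * A) by ring.
move: e; rewrite h1 h2 h3 h4 hi addNr !subr0 mul0r subr0 mulr0 => /eqP.
by rewrite addr0 mulf_eq0 pnatr_eq0 /= => /eqP.
Qed.

Lemma extractF (R : rcfType) (X0 A B Q : FF (complex R)) :
  (forall t : complex R, t \in [:: 1; -1; 'i%C; -'i%C] ->
     X0 + fsc (conjc t) A + fsc t B + fsc t (fsc (conjc t) Q) = 0) -> A = 0.
Proof.
move=> H; apply/ffunP => S; rewrite [RHS]ffunE.
apply: (@extract R (X0 S) _ (B S) (Q S)) => t ht.
have := congr1 (fun f : FF _ => f S) (H t ht).
by rewrite /= !(addfE, fscE) [RHS]ffunE.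
Qed.

Lemma fsc0 (C : comNzRingType) (k : C) : fsc k (0 : FF C) = 0.
Proof. by apply/ffunP => S; rewrite fscE !ffunE mulr0. Qed.

Lemma good_row (R : rcfType) (alpha : FF (complex R)) (u v e : 'rV[complex R]_4) :
  is_22form alpha -> Hf alpha u v u v setT != 0 ->
  Hf alpha u v u (e + conjc (Hf alpha u v v e setT / Hf alpha u v u v setT) *: u
                   + conjc (- Hf alpha u v u e setT / Hf alpha u v u v setT) *: v) = 0 /\
  Hf alpha u v v (e + conjc (Hf alpha u v v e setT / Hf alpha u v u v setT) *: u
                   + conjc (- Hf alpha u v u e setT / Hf alpha u v u v setT) *: v) = 0.
Proof.
move=> ha hd.
have hz : forall S, S != setT -> forall w z, Hf alpha u v w z S = 0.
  by move=> S hS w z; exact: Hf_supp.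
split; apply/ffunP => S; rewrite [RHS]ffunE !(HfD4, HfZ4).
  rewrite Hf_diag fsc0 addr0 !(addfE, fscE) conjcK.
  case: (eqVneq S setT) => [->|hS]; last by rewrite !(hz S hS) mulr0 addr0.
  by rewrite (divfK hd) addrN.
rewrite (Hf_anti alpha u v v u) Hf_diag fsc0 addr0 !(addfE, fscE, oppfE) conjcK.
case: (eqVneq S setT) => [->|hS]; last by rewrite !(hz S hS) oppr0 mulr0 addr0.
by rewrite mulrN (divfK hd) addrN.
Qed.


Theorem lemma6 (R : realType) (alpha : cform (complex R)) :
  is_22form alpha ->
  exists M : 'M[(complex R)]_4,
    M \in unitmx /\
    forall j : 'I_4, (2 <= j)%N ->
      wedge (wedge (wedge (wedge alpha (holo1 (row ord0 M))) (holo1 (row (inord 1) M)))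
                   (conjform1 (row ord0 M))) (conjform1 (row j M)) = zero_form (complex R) /\
      wedge (wedge (wedge (wedge alpha (holo1 (row ord0 M))) (holo1 (row (inord 1) M)))
                   (conjform1 (row (inord 1) M))) (conjform1 (row j M)) = zero_form (complex R).
Proof.
move=> ha.
case: (classic (exists a b c d : complex R,
   Hf alpha (uu a b) (vv c d) (uu a b) (vv c d) != 0)) => [[a [b [c [d hne]]]]|hnex].
  set u := uu a b; set v := vv c d.
  have hd : Hf alpha u v u v setT != 0.
    apply: contra hne => /eqP h0; apply/eqP/ffunP => S; rewrite [RHS]ffunE.
    by case: (eqVneq S setT) => [->//|hS]; exact: Hf_supp.
  pose x j := conjc (Hf alpha u v v j setT / Hf alpha u v u v setT).
  pose y j := conjc (- Hf alpha u v u j setT / Hf alpha u v u v setT).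
  exists (mat4 u v (e2 R + x (e2 R) *: u + y (e2 R) *: v) (e3 R + x (e3 R) *: u + y (e3 R) *: v)).
  split; first exact: unit_M.
  move=> j hj; rewrite !row_mat4 /= inordK //=.
  case: j hj => [[|[|[|[|j]]]] hj] //= _.
    exact: (good_row (e2 R) ha hd).
  exact: (good_row (e3 R) ha hd).
have H0 : forall a b c d, Hf alpha (uu a b) (vv c d) (uu a b) (vv c d) = 0.
  move=> a b c d; apply/eqP; apply: NNPP => h; apply: hnex; exists a, b, c, d; by apply/negP.
have A1 : Hf alpha (e0 R) (e1 R) (e0 R) (e2 R) = 0.
  apply: (@extractF R (Hf alpha (e0 R) (e1 R) (e0 R) (e1 R)) _
     (Hf alpha (e0 R) (e2 R) (e0 R) (e1 R)) (Hf alpha (e0 R) (e2 R) (e0 R) (e2 R))) => t _.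
  by rewrite -exp24; have := H0 0 0 t 0; rewrite uuE vvE !scale0r !addr0.
have A2 : Hf alpha (e0 R) (e1 R) (e0 R) (e3 R) = 0.
  apply: (@extractF R (Hf alpha (e0 R) (e1 R) (e0 R) (e1 R)) _
     (Hf alpha (e0 R) (e3 R) (e0 R) (e1 R)) (Hf alpha (e0 R) (e3 R) (e0 R) (e3 R))) => t _.
  by rewrite -exp24; have := H0 0 0 0 t; rewrite uuE vvE !scale0r !addr0.
have A3 : Hf alpha (e0 R) (e1 R) (e2 R) (e1 R) = 0.
  apply: (@extractF R (Hf alpha (e0 R) (e1 R) (e0 R) (e1 R)) _
     (Hf alpha (e2 R) (e1 R) (e0 R) (e1 R)) (Hf alpha (e2 R) (e1 R) (e2 R) (e1 R))) => t _.
  by rewrite -exp13; have := H0 t 0 0 0; rewrite uuE vvE !scale0r !addr0.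
have A4 : Hf alpha (e0 R) (e1 R) (e3 R) (e1 R) = 0.
  apply: (@extractF R (Hf alpha (e0 R) (e1 R) (e0 R) (e1 R)) _
     (Hf alpha (e3 R) (e1 R) (e0 R) (e1 R)) (Hf alpha (e3 R) (e1 R) (e3 R) (e1 R))) => t _.
  by rewrite -exp13; have := H0 0 t 0 0; rewrite uuE vvE !scale0r !addr0.
exists (mat4 (e0 R) (e1 R) (e2 R) (e3 R)); split.
  by rewrite /e0 /e1 /e2 /e3 test_ord unitmx1.
move=> j hj; rewrite !row_mat4 /= inordK //=.
case: j hj => [[|[|[|[|j]]]] hj] //= _.
  change (Hf alpha (e0 R) (e1 R) (e0 R) (e2 R) = 0 /\ Hf alpha (e0 R) (e1 R) (e1 R) (e2 R) = 0).
  by split; [exact: A1 | rewrite (Hf_anti alpha (e0 R) (e1 R) (e1 R) (e2 R)) A3 oppr0].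
change (Hf alpha (e0 R) (e1 R) (e0 R) (e3 R) = 0 /\ Hf alpha (e0 R) (e1 R) (e1 R) (e3 R) = 0).
by split; [exact: A2 | rewrite (Hf_anti alpha (e0 R) (e1 R) (e1 R) (e3 R)) A4 oppr0].
Qed.
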